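(* Let $K\subset\mathbb{R}^3$ be finite, let $M\subset\mathbb{R}^3$ with $K^{rc}\subset M$, let $p$ be a point in $M\setminus K$, and let $B$ be a $D$-prism for $(M,K,p)$. Then $K^{rc}\subset M\setminus B$.
   Context: A horizontal segment/line is one contained in a plane $\{z=c\}$; a vertical one is parallel to the $z$ axis. A function $f:\mathbb{R}^3\to\mathbb{R}$ is $2+1$-convex if its restriction to every horizontal and every vertical line is convex; for compact $S$, $S^{rc}=\{x: f(x)\le\sup_S f\text{ for every } 2+1\text{-convex } f\}$. For $M\subset\mathbb{R}^3$, $p\in M$ is an extremal point of $M$ if no relatively open horizontal or vertical segment contained in $M$ contains $p$. Let $K$ be finite, $M\supset K^{rc}$, and $p\in M$ an extremal point of $M$ with $p\notin K$. A $D$-prism for $(M,K,p)$ is the interior $B$ of a product $T\times H$, where $T$ is a (closed) triangle in a horizontal plane (identified with a triangle in $\mathbb{R}^2$) and $H$ is a vertical segment (identified with a compact interval in $\mathbb{R}$), such that: $p\in B$; $K\cap B=\emptyset$; and $M\cap\partial B$ is contained in the union of just one of the three closed vertical rectangular faces of $\partial B$ and just one of the two closed horizontal triangular faces of $\partial B$. *)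

(* Defs.v *)
From Stdlib Require Import Reals List.
Open Scope R_scope.

Definition point := (R * R * R)%type.
Definition px (q : point) : R := fst (fst q).
Definition py (q : point) : R := snd (fst q).
Definition pz (q : point) : R := snd q.

Definition convex_R (g : R -> R) : Prop :=
  forall s t l, 0 <= l <= 1 -> g (l * s + (1 - l) * t) <= l * g s + (1 - l) * g t.

Definition convex21 (f : point -> R) : Prop :=
  (forall x0 y0 c a b, convex_R (fun t => f (x0 + t * a, y0 + t * b, c))) /\
  (forall x0 y0 z0, convex_R (fun t => f (x0, y0, z0 + t))).

(* K^{rc} for a finite set K given as a list:
   x \in K^rc iff f x <= sup_K f = max_K f for every 2+1-convex f
   (for K empty, sup = -oo, so K^rc is empty, matching "exists k"). *)
Definition rc_hull (K : list point) (x : point) : Prop :=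
  forall f, convex21 f -> exists k, In k K /\ f x <= f k.

(* A prism T x H: T the triangle with vertices a, b, c in the horizontal
   plane (identified with R^2), H = [h1, h2]. *)
Record prism := Prism { va : R * R; vb : R * R; vc : R * R; h1 : R; h2 : R }.

Definition bary (P : prism) (x y l1 l2 l3 : R) : Prop :=
  l1 + l2 + l3 = 1 /\
  x = l1 * fst (va P) + l2 * fst (vb P) + l3 * fst (vc P) /\
  y = l1 * snd (va P) + l2 * snd (vb P) + l3 * snd (vc P).

Definition nondeg (P : prism) : Prop :=
  (fst (vb P) - fst (va P)) * (snd (vc P) - snd (va P))
  - (snd (vb P) - snd (va P)) * (fst (vc P) - fst (va P)) <> 0.

Definition prism_int (P : prism) (q : point) : Prop :=
  (exists l1 l2 l3, bary P (px q) (py q) l1 l2 l3 /\ 0 < l1 /\ 0 < l2 /\ 0 < l3) /\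
  h1 P < pz q < h2 P.

Definition prism_closed (P : prism) (q : point) : Prop :=
  (exists l1 l2 l3, bary P (px q) (py q) l1 l2 l3 /\ 0 <= l1 /\ 0 <= l2 /\ 0 <= l3) /\
  h1 P <= pz q <= h2 P.

Definition prism_bd (P : prism) (q : point) : Prop :=
  prism_closed P q /\ ~ prism_int P q.

(* the three closed vertical rectangular faces: face i is (edge opposite to
   vertex i) x H *)
Definition vface (P : prism) (i : nat) (q : point) : Prop :=
  (exists l1 l2 l3, bary P (px q) (py q) l1 l2 l3 /\ 0 <= l1 /\ 0 <= l2 /\ 0 <= l3 /\
     ((i = 0%nat /\ l1 = 0) \/ (i = 1%nat /\ l2 = 0) \/ (i = 2%nat /\ l3 = 0))) /\
  h1 P <= pz q <= h2 P.

Definition hface (P : prism) (top : bool) (q : point) : Prop :=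
  (exists l1 l2 l3, bary P (px q) (py q) l1 l2 l3 /\ 0 <= l1 /\ 0 <= l2 /\ 0 <= l3) /\
  pz q = (if top then h2 P else h1 P).

Definition D_prism (M : point -> Prop) (K : list point) (p : point) (P : prism) : Prop :=
  nondeg P /\
  prism_int P p /\
  (forall k, In k K -> ~ prism_int P k) /\
  exists (i : nat) (top : bool), (i < 3)%nat /\
    forall q, M q -> prism_bd P q -> vface P i q \/ hface P top q.

(* Main.v *)
Require Import Defs.
From Stdlib Require Import Reals List Lra Psatz Lia Classical ClassicalDescription.
Open Scope R_scope.

Definition tri (g : R -> R) u v w := (g v - g u) * (w - v) <= (g w - g v) * (v - u).
Definition conv_on (g : R -> R) a b :=
  forall u v w, a < u -> u < v -> v < w -> w < b -> tri g u v w.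

Lemma convex_tri g : convex_R g -> forall u v w, u < v -> v < w -> tri g u v w.
Proof.
  intros Hc u v w H1 H2.
  set (l := (w - v) / (w - u)).
  assert (El : l * (w - u) = w - v) by (unfold l; field; lra).
  assert (Hl : 0 <= l <= 1) by (split; nra).
  specialize (Hc u w l Hl).
  replace (l * u + (1 - l) * w) with v in Hc by nra.
  assert (E : (w-u) * (l * g u + (1-l) * g w) = (w-v)*g u + (v-u)*g w)
    by (unfold l; field; lra).
  assert (H3 : (w-u) * g v <= (w-u) * (l * g u + (1-l) * g w))
    by (apply Rmult_le_compat_l; lra).
  unfold tri; nra.
Qed.

Lemma tri_convex g : (forall u v w, u < v -> v < w -> tri g u v w) -> convex_R g.
Proof.
  intros Ht s t l Hl.
  destruct (Req_dec l 0) as [E0|N0].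
  { subst l. replace (0 * s + (1 - 0) * t) with t by ring. lra. }
  destruct (Req_dec l 1) as [E1|N1].
  { subst l. replace (1 * s + (1 - 1) * t) with s by ring. lra. }
  destruct (Rtotal_order s t) as [Hst|[Hst|Hst]].
  - set (v := l * s + (1 - l) * t).
    assert (Ev1 : t - v = l * (t - s)) by (unfold v; ring).
    assert (Ev2 : v - s = (1 - l) * (t - s)) by (unfold v; ring).
    assert (Hv1 : s < v) by nra. assert (Hv2 : v < t) by nra.
    specialize (Ht s v t Hv1 Hv2). unfold tri in Ht.
    rewrite Ev1, Ev2 in Ht.
    assert (((g v - g s) * l - (g t - g v) * (1 - l)) * (t - s) <= 0) by nra.
    assert ((g v - g s) * l - (g t - g v) * (1 - l) <= 0) by nra.
    nra.
  - subst t. replace (l * s + (1 - l) * s) with s by ring. lra.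
  - set (v := l * s + (1 - l) * t).
    assert (Ev1 : s - v = (1 - l) * (s - t)) by (unfold v; ring).
    assert (Ev2 : v - t = l * (s - t)) by (unfold v; ring).
    assert (Hv1 : t < v) by nra. assert (Hv2 : v < s) by nra.
    specialize (Ht t v s Hv1 Hv2). unfold tri in Ht.
    rewrite Ev1, Ev2 in Ht.
    assert (((g v - g t) * (1 - l) - (g s - g v) * l) * (s - t) <= 0) by nra.
    assert ((g v - g t) * (1 - l) - (g s - g v) * l <= 0) by nra.
    nra.
Qed.

Definition S (g : R -> R) u v := (g v - g u) / (v - u).

Lemma S_id g u v w : u < v -> v < w ->
  (w - u) * S g u w = (v - u) * S g u v + (w - v) * S g v w.
Proof. intros; unfold S; field; lra. Qed.

Lemma tri_S g u v w : u < v -> v < w -> (tri g u v w <-> S g u v <= S g v w).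
Proof.
  intros H1 H2. unfold tri.
  assert (E1 : g v - g u = S g u v * (v - u)) by (unfold S; field; lra).
  assert (E2 : g w - g v = S g v w * (w - v)) by (unfold S; field; lra).
  rewrite E1, E2. assert (P : 0 < (v - u) * (w - v)) by (apply Rmult_lt_0_compat; lra).
  split; intro.
  - assert (0 <= (S g v w - S g u v) * ((v - u) * (w - v))) by nra. nra.
  - assert (0 <= (S g v w - S g u v) * ((v - u) * (w - v))) by (apply Rmult_le_pos; lra). nra.
Qed.

Lemma S_avg g u v w : u < v -> v < w ->
  ((S g u v <= S g v w) <-> (S g u v <= S g u w)) /\
  ((S g u v <= S g v w) <-> (S g u w <= S g v w)).
Proof.
  intros H1 H2. pose proof (S_id g u v w H1 H2) as E.
  set (a := S g u v) in *. set (b := S g v w) in *. set (c := S g u w) in *.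
  assert (E1 : (w - u) * (c - a) = (w - v) * (b - a)) by lra.
  assert (E2 : (w - u) * (b - c) = (v - u) * (b - a)) by lra.
  split; split; intro.
  - assert (0 <= (w - u) * (c - a)) by (rewrite E1; apply Rmult_le_pos; lra). nra.
  - assert (0 <= (w - v) * (b - a)) by (rewrite <- E1; apply Rmult_le_pos; lra). nra.
  - assert (0 <= (w - u) * (b - c)) by (rewrite E2; apply Rmult_le_pos; lra). nra.
  - assert (0 <= (v - u) * (b - a)) by (rewrite <- E2; apply Rmult_le_pos; lra). nra.
Qed.

Lemma conv_on_mono g a b a' b' : a <= a' -> b' <= b -> conv_on g a b -> conv_on g a' b'.
Proof. intros Ha Hb H u v w ? ? ? ?; apply H; lra. Qed.

Lemma conv_on_ext g g' a b : (forall s, a < s < b -> g s = g' s) ->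
  conv_on g' a b -> conv_on g a b.
Proof.
  intros E H u v w H1 H2 H3 H4. unfold tri.
  rewrite !E by lra. apply H; lra.
Qed.

Lemma convex_conv_on g a b : convex_R g -> conv_on g a b.
Proof. intros H u v w _ H1 H2 _. now apply convex_tri. Qed.

Lemma conv_on_glue g a1 a2 b1 b2 : a1 < a2 -> a2 < b1 -> b1 < b2 ->
  conv_on g a1 b1 -> conv_on g a2 b2 -> conv_on g a1 b2.
Proof.
  intros Ha Hab Hb C1 C2 u v w H1 H2 H3 H4.
  destruct (Rlt_dec w b1) as [Hw|Hw]. { apply C1; lra. }
  destruct (Rlt_dec a2 u) as [Hu|Hu]. { apply C2; lra. }
  apply (tri_S g u v w H2 H3).
  destruct (Rlt_dec a2 v) as [Hv1|Hv1].
  - destruct (Rlt_dec v b1) as [Hv2|Hv2].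
    + set (v' := (v + b1) / 2).
      assert (A : S g u v <= S g v v').
      { apply (tri_S g u v v'); try (unfold v'; lra). apply C1; unfold v'; lra. }
      assert (B : S g v v' <= S g v w).
      { assert (T : S g v v' <= S g v' w).
        { apply (tri_S g v v' w); try (unfold v'; lra). apply C2; unfold v'; lra. }
        apply (proj1 (proj1 (S_avg g v v' w ltac:(unfold v'; lra) ltac:(unfold v'; lra)))). exact T. }
      lra.
    +
      set (m := (a2 + b1) / 2). set (m'' := (a2 + m) / 2).
      assert (A : S g u m <= S g m'' m).
      { apply (proj1 (proj2 (S_avg g u m'' m ltac:(unfold m'', m; lra) ltac:(unfold m'', m; lra)))).
        apply (tri_S g u m'' m); try (unfold m'', m; lra). apply C1; unfold m'', m; lra. }
      assert (B : S g m'' m <= S g m v).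
      { apply (tri_S g m'' m v); try (unfold m'', m; lra). apply C2; unfold m'', m; lra. }
      assert (Cc : S g u v <= S g m v).
      { apply (proj1 (proj2 (S_avg g u m v ltac:(unfold m; lra) ltac:(unfold m; lra)))).
        lra. }
      assert (D : S g m v <= S g v w).
      { apply (tri_S g m v w); try (unfold m; lra). apply C2; unfold m; lra. }
      lra.
  -
    set (m := (a2 + b1) / 2). set (m' := (m + b1) / 2).
    assert (A : S g u v <= S g v m).
    { apply (tri_S g u v m); try (unfold m; lra). apply C1; unfold m; lra. }
    assert (B : S g v m <= S g m m').
    { apply (tri_S g v m m'); try (unfold m', m; lra). apply C1; unfold m', m; lra. }
    assert (Cc : S g m m' <= S g m w).
    { apply (proj1 (proj1 (S_avg g m m' w ltac:(unfold m', m; lra) ltac:(unfold m', m; lra)))).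
      apply (tri_S g m m' w); try (unfold m', m; lra). apply C2; unfold m', m; lra. }
    assert (D : S g v m <= S g v w).
    { apply (proj1 (proj1 (S_avg g v m w ltac:(unfold m; lra) ltac:(unfold m; lra)))).
      lra. }
    lra.
Qed.

Lemma local_global g : (forall t, exists e, e > 0 /\ conv_on g (t - e) (t + e)) ->
  forall a b, a < b -> conv_on g a b.
Proof.
  intros Hl a b Hab.
  set (E := fun t => a < t <= b /\ conv_on g a t).
  assert (Hb : bound E) by (exists b; intros t [Ht _]; lra).
  destruct (Hl a) as [e0 [He0 C0]].
  assert (Hne : exists t, E t).
  { exists (Rmin (a + e0) b). split.
    - split; [apply Rmin_glb_lt; lra | apply Rmin_r].
    - apply (conv_on_mono g (a - e0) (a + e0)); try lra. apply Rmin_l. exact C0. }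
  destruct (completeness E Hb Hne) as [s [Hub Hlub]].
  destruct Hne as [t0 Ht0].
  assert (Hs1 : t0 <= s) by (apply Hub; exact Ht0).
  assert (Hs2 : s <= b) by (apply Hlub; intros t [Ht _]; lra).
  destruct Ht0 as [[Ht0a Ht0b] _].
  destruct (Hl s) as [e [He Cs]].
  assert (Ht1 : exists t1, E t1 /\ s - e < t1).
  { apply NNPP; intro N.
    assert (s <= s - e); [|lra].
    apply Hlub. intros t Ht. apply Rnot_lt_le. intro Hlt. apply N. exists t; auto. }
  destruct Ht1 as [t1 [[[Ht1a Ht1b] Ct1] Ht1c]].
  assert (Ht1s : t1 <= s) by (apply Hub; split; [lra|exact Ct1]).
  assert (Cas : conv_on g a (s + e)).
  { destruct (Rle_dec (s - e) a) as [Hle|Hle].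
    - apply (conv_on_mono g (s - e) (s + e)); lra || exact Cs.
    - apply (conv_on_glue g a (s - e) t1 (s + e)); try lra; assumption. }
  destruct (Rlt_dec b (s + e)) as [Hlt|Hlt].
  - apply (conv_on_mono g a (s + e)); lra || exact Cas.
  - assert (s + e / 2 <= s); [|lra].
    apply Hub. split; [lra|]. apply (conv_on_mono g a (s + e)); lra || exact Cas.
Qed.

Lemma local_convex g : (forall t, exists e, e > 0 /\ conv_on g (t - e) (t + e)) ->
  convex_R g.
Proof.
  intros Hl. apply tri_convex. intros u v w H1 H2.
  apply (local_global g Hl (u - 1) (w + 1)); lra.
Qed.

Lemma convex_R_ext g g' : (forall t, g t = g' t) -> convex_R g -> convex_R g'.
Proof. intros E H s t l Hl. rewrite <- !E. apply H; auto. Qed.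

Lemma convex_R_max g h : convex_R g -> convex_R h -> convex_R (fun t => Rmax (g t) (h t)).
Proof.
  intros Hg Hh s t l Hl.
  apply Rmax_lub.
  - eapply Rle_trans; [apply Hg; auto|].
    apply Rplus_le_compat; apply Rmult_le_compat_l; try lra; apply Rmax_l.
  - eapply Rle_trans; [apply Hh; auto|].
    apply Rplus_le_compat; apply Rmult_le_compat_l; try lra; apply Rmax_r.
Qed.

Lemma convex_R_aff g al be : (forall t, g t = al * t + be) -> convex_R g.
Proof. intros E s t l Hl. rewrite !E. right. ring. Qed.

Lemma convex_R_scale g al be : 0 <= al -> convex_R g -> convex_R (fun t => al * g t + be).
Proof.
  intros Ha H s t l Hl. specialize (H s t l Hl).
  assert (al * g (l * s + (1 - l) * t) <= al * (l * g s + (1 - l) * g t))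
    by (apply Rmult_le_compat_l; auto). nra.
Qed.

Lemma seg_max g s v t : convex_R g -> s <= v <= t -> g v <= Rmax (g s) (g t).
Proof.
  intros H Hv. destruct (Req_dec s t) as [E|N].
  { subst. replace v with t by lra. apply Rmax_l. }
  set (l := (t - v) / (t - s)).
  assert (El : l * (t - s) = t - v) by (unfold l; field; lra).
  assert (Hl : 0 <= l <= 1) by (split; nra).
  specialize (H s t l Hl). replace (l * s + (1 - l) * t) with v in H by nra.
  eapply Rle_trans; [exact H|].
  assert (l * g s <= l * Rmax (g s) (g t)) by (apply Rmult_le_compat_l; [lra|apply Rmax_l]).
  assert ((1-l) * g t <= (1-l) * Rmax (g s) (g t)) by (apply Rmult_le_compat_l; [lra|apply Rmax_r]).
  nra.
Qed.

Lemma c21_max f g : convex21 f -> convex21 g -> convex21 (fun p => Rmax (f p) (g p)).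
Proof.
  intros [F1 F2] [G1 G2]; split; intros.
  - apply (convex_R_max (fun t => f _) (fun t => g _)); auto.
  - apply (convex_R_max (fun t => f _) (fun t => g _)); auto.
Qed.

Lemma c21_scale f al be : 0 <= al -> convex21 f -> convex21 (fun p => al * f p + be).
Proof.
  intros Ha [F1 F2]; split; intros.
  - apply (convex_R_scale (fun t => f _)); auto.
  - apply (convex_R_scale (fun t => f _)); auto.
Qed.

Lemma c21_const c : convex21 (fun _ => c).
Proof. split; intros; apply (convex_R_aff _ 0 c); intros; ring. Qed.

Lemma convex_R_comp_aff g al be : convex_R g -> convex_R (fun t => g (al * t + be)).
Proof.
  intros H s t l Hl. simpl.
  replace (al * (l * s + (1 - l) * t) + be) with (l * (al * s + be) + (1 - l) * (al * t + be)) by ring.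
  apply H; auto.
Qed.

Lemma cvx_x f y c : convex21 f -> convex_R (fun t => f (t, y, c)).
Proof.
  intros [H _]. apply (convex_R_ext (fun t => f (0 + t * 1, y + t * 0, c))); [|apply H].
  intros t. replace (0 + t * 1) with t by ring. replace (y + t * 0) with y by ring. reflexivity.
Qed.

Lemma cvx_y f x c : convex21 f -> convex_R (fun t => f (x, t, c)).
Proof.
  intros [H _]. apply (convex_R_ext (fun t => f (x + t * 0, 0 + t * 1, c))); [|apply H].
  intros t. replace (0 + t * 1) with t by ring. replace (x + t * 0) with x by ring. reflexivity.
Qed.

Lemma cvx_z f x y : convex21 f -> convex_R (fun t => f (x, y, t)).
Proof.
  intros [_ H]. apply (convex_R_ext (fun t => f (x, y, 0 + t))); [|apply H].
  intros t. replace (0 + t) with t by ring. reflexivity.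
Qed.

Lemma cvx_zd f x y z0 d : convex21 f -> convex_R (fun t => f (x, y, z0 + t * d)).
Proof.
  intros Hf. apply (convex_R_ext (fun t => (fun s => f (x, y, s)) (d * t + z0))).
  - intros t. simpl. replace (d * t + z0) with (z0 + t * d) by ring. reflexivity.
  - apply (convex_R_comp_aff (fun s => f (x, y, s))). now apply cvx_z.
Qed.

Lemma Rmax_mono a b a' b' : a <= a' -> b <= b' -> Rmax a b <= Rmax a' b'.
Proof.
  intros. apply Rmax_lub.
  - eapply Rle_trans; [eassumption| apply Rmax_l].
  - eapply Rle_trans; [eassumption| apply Rmax_r].
Qed.

Definition Q4 (f : point -> R) xa ya zz :=
  Rmax (Rmax (f (xa - 1, ya - 1, zz)) (f (xa + 1, ya - 1, zz)))
       (Rmax (f (xa - 1, ya + 1, zz)) (f (xa + 1, ya + 1, zz))).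
Definition U8 (f : point -> R) xa ya za := Rmax (Q4 f xa ya (za - 1)) (Q4 f xa ya (za + 1)).

Lemma ub_box f xa ya za x y z : convex21 f ->
  xa - 1 <= x <= xa + 1 -> ya - 1 <= y <= ya + 1 -> za - 1 <= z <= za + 1 ->
  f (x, y, z) <= U8 f xa ya za.
Proof.
  intros Hf Hx Hy Hz.
  assert (L1 : forall yy zz, f (x, yy, zz) <= Rmax (f (xa - 1, yy, zz)) (f (xa + 1, yy, zz)))
    by (intros; apply (seg_max (fun t => f (t, yy, zz))); [apply cvx_x; auto| lra]).
  assert (L2 : forall zz, f (x, y, zz) <= Q4 f xa ya zz).
  { intros zz. eapply Rle_trans.
    - apply (seg_max (fun t => f (x, t, zz)) (ya - 1) y (ya + 1)); [apply cvx_y; auto| lra].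
    - unfold Q4. apply Rmax_mono.
      + apply L1.
      + apply L1. }
  eapply Rle_trans.
  - apply (seg_max (fun t => f (x, y, t)) (za - 1) z (za + 1)); [apply cvx_z; auto| lra].
  - unfold U8. apply Rmax_mono; apply L2.
Qed.

Lemma extrap g k U : convex_R g -> k > 0 -> g (- k) <= U -> (1 + k) * g 0 - U <= k * g 1.
Proof.
  intros H Hk HU.
  set (l := k / (1 + k)).
  assert (Hl : 0 <= l <= 1).
  { unfold l. split.
    - apply Rlt_le, Rdiv_lt_0_compat; lra.
    - apply (Rmult_le_reg_r (1 + k)); [lra|]. field_simplify; lra. }
  specialize (H 1 (- k) l Hl).
  replace (l * 1 + (1 - l) * - k) with 0 in H by (unfold l; field; lra).
  assert (E : (1 + k) * (l * g 1 + (1 - l) * g (- k)) = k * g 1 + g (- k))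
    by (unfold l; field; lra).
  assert ((1 + k) * g 0 <= (1 + k) * (l * g 1 + (1 - l) * g (- k)))
    by (apply Rmult_le_compat_l; lra).
  lra.
Qed.

Definition box (q : point) r (p : point) :=
  px q - r < px p < px q + r /\ py q - r < py p < py q + r /\ pz q - r < pz p < pz q + r.

Lemma lsc21 f a e : convex21 f -> e > 0 -> exists r, r > 0 /\ forall p, box a r p -> f a - e < f p.
Proof.
  intros Hf He.
  destruct a as [[xa ya] za].
  set (U := U8 f xa ya za).
  set (fa := f (xa, ya, za)).
  assert (HU : fa <= U) by (apply ub_box; auto; lra).
  set (D := U - fa).
  set (k := Rmax 1 ((3 * D + 1) / e)).
  assert (Hk1 : 1 <= k) by apply Rmax_l.
  assert (Hk2 : (3 * D + 1) / e <= k) by apply Rmax_r.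
  assert (Hke : 3 * D + 1 <= k * e).
  { apply (Rmult_le_compat_r e) in Hk2; [|lra].
    replace ((3 * D + 1) / e * e) with (3 * D + 1) in Hk2 by (field; lra). lra. }
  exists (1 / k). split; [apply Rdiv_lt_0_compat; lra|].
  intros [[x y] z] [Bx [By Bz]]. unfold px, py, pz in Bx, By, Bz; simpl in Bx, By, Bz.
  set (dx := x - xa). set (dy := y - ya). set (dz := z - za).
  assert (Ek : (1 / k) * k = 1) by (field; lra).
  assert (Gen : forall d, - (1 / k) < d < 1 / k -> - 1 <= d * k <= 1).
  { intros d [Hd1 Hd2].
    assert (d * k < (1 / k) * k) by (apply Rmult_lt_compat_r; lra).
    assert (- (1 / k) * k < d * k) by (apply Rmult_lt_compat_r; lra).
    lra. }
  assert (Hdx : - 1 <= dx * k <= 1) by (apply Gen; unfold dx; lra).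
  assert (Hdy : - 1 <= dy * k <= 1) by (apply Gen; unfold dy; lra).
  assert (Hdz : - 1 <= dz * k <= 1) by (apply Gen; unfold dz; lra).
  assert (Hr1 : 1 / k <= 1) by (apply (Rmult_le_reg_r k); [lra|]; rewrite Ek; lra).
  set (F1 := f (x, y, za)).
  assert (S1 : (1 + k) * fa - U <= k * F1).
  { pose proof (extrap (fun t => f (xa + t * dx, ya + t * dy, za)) k U) as X.
    simpl in X.
    replace (xa + 0 * dx) with xa in X by ring. replace (ya + 0 * dy) with ya in X by ring.
    replace (xa + 1 * dx) with x in X by (unfold dx; ring).
    replace (ya + 1 * dy) with y in X by (unfold dy; ring).
    apply X.
    - destruct Hf as [H1 _]. apply H1.
    - lra.
    - apply ub_box; auto; nra. }
  assert (S2 : (1 + k) * F1 - U <= k * f (x, y, z)).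
  { pose proof (extrap (fun t => f (x, y, za + t * dz)) k U) as X.
    simpl in X.
    replace (za + 0 * dz) with za in X by ring.
    replace (za + 1 * dz) with z in X by (unfold dz; ring).
    apply X.
    - apply cvx_zd; auto.
    - lra.
    - apply ub_box; auto; try nra; unfold dx, dy in *; nra. }
  apply Rnot_le_lt. intro Hc.
  assert (T1 : k * k * (f (x, y, z) - fa) >= - (2 * k + 1) * D).
  { unfold D. nra. }
  assert (T2 : k * k * (f (x, y, z) - fa) <= - (k * k) * e) by nra.
  assert (T3 : (2 * k + 1) * D <= 3 * k * D).
  { assert (0 <= D) by (unfold D; lra). nra. }
  nra.
Qed.

Lemma abs_small d r : - r < d < r -> Rabs d < r.
Proof. intros [H1 H2]. unfold Rabs. destruct (Rcase_abs d); lra. Qed.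

Lemma cont_bil A B C Dd E q e : e > 0 -> exists r, r > 0 /\ forall p, box q r p ->
  Rabs ((A * px p + B * py p + C) * (Dd * pz p + E) -
        (A * px q + B * py q + C) * (Dd * pz q + E)) < e.
Proof.
  intros He.
  set (u0 := A * px q + B * py q + C). set (v0 := Dd * pz q + E).
  set (AB := Rabs A + Rabs B).
  set (K := Rabs u0 * Rabs Dd + AB * Rabs v0 + AB * Rabs Dd).
  assert (HK : 0 <= K) by (unfold K, AB; pose proof (Rabs_pos u0); pose proof (Rabs_pos Dd);
    pose proof (Rabs_pos v0); pose proof (Rabs_pos A); pose proof (Rabs_pos B); nra).
  set (r := Rmin 1 (e / (K + 1))).
  assert (Hr1 : r <= 1) by apply Rmin_l.
  assert (Hr2 : r <= e / (K + 1)) by apply Rmin_r.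
  assert (Hr0 : 0 < r) by (apply Rmin_glb_lt; [lra| apply Rdiv_lt_0_compat; lra]).
  exists r. split; [lra|].
  intros p [Bx [By Bz]].
  set (dx := px p - px q). set (dy := py p - py q). set (dz := pz p - pz q).
  assert (Adx : Rabs dx < r) by (apply abs_small; unfold dx; lra).
  assert (Ady : Rabs dy < r) by (apply abs_small; unfold dy; lra).
  assert (Adz : Rabs dz < r) by (apply abs_small; unfold dz; lra).
  set (w := A * dx + B * dy).
  assert (Aw : Rabs w <= AB * r).
  { unfold w, AB. eapply Rle_trans; [apply Rabs_triang|]. rewrite !Rabs_mult.
    pose proof (Rabs_pos A); pose proof (Rabs_pos B); nra. }
  replace ((A * px p + B * py p + C) * (Dd * pz p + E) - u0 * v0)
    with (u0 * Dd * dz + w * v0 + w * (Dd * dz))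
    by (unfold u0, v0, w, dx, dy, dz; ring).
  eapply Rle_lt_trans; [apply Rabs_triang|].
  eapply Rle_lt_trans; [apply Rplus_le_compat_r; apply Rabs_triang|].
  rewrite !Rabs_mult.
  pose proof (Rabs_pos u0); pose proof (Rabs_pos Dd); pose proof (Rabs_pos v0);
  pose proof (Rabs_pos w); pose proof (Rabs_pos dz); pose proof (Rabs_pos A); pose proof (Rabs_pos B).
  assert (T1 : Rabs u0 * Rabs Dd * Rabs dz <= Rabs u0 * Rabs Dd * r).
  { assert (0 <= Rabs u0 * Rabs Dd) by nra. nra. }
  assert (T2 : Rabs w * Rabs v0 <= AB * r * Rabs v0) by (apply Rmult_le_compat_r; lra).
  assert (T3 : Rabs w * (Rabs Dd * Rabs dz) <= AB * r * (Rabs Dd * 1)).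
  { assert (Rabs Dd * Rabs dz <= Rabs Dd * 1) by nra. apply Rmult_le_compat; nra. }
  assert (T4 : r * K < e).
  { assert (r * (K + 1) <= e).
    { apply (Rmult_le_compat_r (K + 1)) in Hr2; [|lra].
      replace (e / (K + 1) * (K + 1)) with e in Hr2 by (field; lra). lra. }
    nra. }
  unfold K in T4. nra.
Qed.

Definition Dt (P : prism) :=
  (fst (vb P) - fst (va P)) * (snd (vc P) - snd (va P))
  - (snd (vb P) - snd (va P)) * (fst (vc P) - fst (va P)).
Definition lam2 P x y :=
  ((x - fst (va P)) * (snd (vc P) - snd (va P)) - (y - snd (va P)) * (fst (vc P) - fst (va P))) / Dt P.
Definition lam3 P x y :=
  ((fst (vb P) - fst (va P)) * (y - snd (va P)) - (snd (vb P) - snd (va P)) * (x - fst (va P))) / Dt P.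
Definition lam1 P x y := 1 - lam2 P x y - lam3 P x y.

Lemma bary_iff P x y l1 l2 l3 : nondeg P ->
  (bary P x y l1 l2 l3 <-> l1 = lam1 P x y /\ l2 = lam2 P x y /\ l3 = lam3 P x y).
Proof.
  intros ND. unfold nondeg in ND. fold (Dt P) in ND.
  destruct P as [[ax ay] [bx by0] [cx cy] hh1 hh2]. unfold bary, lam1, lam2, lam3, Dt in *; simpl in *.
  split.
  - intros [E1 [Ex Ey]].
    assert (E2 : l2 = ((x - ax) * (cy - ay) - (y - ay) * (cx - ax)) /
                      ((bx - ax) * (cy - ay) - (by0 - ay) * (cx - ax))).
    { apply (Rmult_eq_reg_r ((bx - ax) * (cy - ay) - (by0 - ay) * (cx - ax))); [|exact ND].
      field_simplify; [|exact ND]. subst x y.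
      replace l1 with (1 - l2 - l3) by lra. ring. }
    assert (E3 : l3 = ((bx - ax) * (y - ay) - (by0 - ay) * (x - ax)) /
                      ((bx - ax) * (cy - ay) - (by0 - ay) * (cx - ax))).
    { apply (Rmult_eq_reg_r ((bx - ax) * (cy - ay) - (by0 - ay) * (cx - ax))); [|exact ND].
      field_simplify; [|exact ND]. subst x y.
      replace l1 with (1 - l2 - l3) by lra. ring. }
    split; [|split]; auto. rewrite <- E2, <- E3. lra.
  - intros [E1 [E2 E3]]. subst l1 l2 l3. split; [ring|split; field; exact ND].
Qed.

Definition lamI (i : nat) P x y :=
  match i with 0%nat => lam1 P x y | 1%nat => lam2 P x y | _ => lam3 P x y end.

Lemma lam_aff i P : nondeg P -> exists A B C, forall x y, lamI i P x y = A * x + B * y + C.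
Proof.
  intros ND. unfold nondeg in ND.
  destruct P as [[ax ay] [bx by0] [cx cy] hh1 hh2]. simpl in ND.
  set (D := (bx - ax) * (cy - ay) - (by0 - ay) * (cx - ax)) in *.
  destruct i as [|[|i]]; simpl; unfold lam1, lam2, lam3, Dt; simpl; fold D.
  - exists (- ((cy - ay) / D) + (by0 - ay) / D), ((cx - ax) / D - (bx - ax) / D),
      (1 - (- ax * (cy - ay) + ay * (cx - ax)) / D - (- (bx - ax) * ay + (by0 - ay) * ax) / D).
    intros x y. field. exact ND.
  - exists ((cy - ay) / D), (- ((cx - ax) / D)), ((- ax * (cy - ay) + ay * (cx - ax)) / D).
    intros x y. field. exact ND.
  - exists (- ((by0 - ay) / D)), ((bx - ax) / D), ((- (bx - ax) * ay + (by0 - ay) * ax) / D).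
    intros x y. field. exact ND.
Qed.

Definition lams P (q : point) := (lam1 P (px q) (py q), lam2 P (px q) (py q), lam3 P (px q) (py q)).

Lemma int_iff P q : nondeg P -> (prism_int P q <->
  (0 < lam1 P (px q) (py q) /\ 0 < lam2 P (px q) (py q) /\ 0 < lam3 P (px q) (py q)) /\
  h1 P < pz q < h2 P).
Proof.
  intros ND. unfold prism_int. split.
  - intros [[l1 [l2 [l3 [Hb [H1 [H2 H3]]]]]] Hz].
    apply bary_iff in Hb; auto. destruct Hb as [E1 [E2 E3]]. subst. auto.
  - intros [[H1 [H2 H3]] Hz]. split; auto.
    exists (lam1 P (px q) (py q)), (lam2 P (px q) (py q)), (lam3 P (px q) (py q)).
    split; auto. apply bary_iff; auto.
Qed.

Lemma closed_iff P q : nondeg P -> (prism_closed P q <->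
  (0 <= lam1 P (px q) (py q) /\ 0 <= lam2 P (px q) (py q) /\ 0 <= lam3 P (px q) (py q)) /\
  h1 P <= pz q <= h2 P).
Proof.
  intros ND. unfold prism_closed. split.
  - intros [[l1 [l2 [l3 [Hb [H1 [H2 H3]]]]]] Hz].
    apply bary_iff in Hb; auto. destruct Hb as [E1 [E2 E3]]. subst. auto.
  - intros [[H1 [H2 H3]] Hz]. split; auto.
    exists (lam1 P (px q) (py q)), (lam2 P (px q) (py q)), (lam3 P (px q) (py q)).
    split; auto. apply bary_iff; auto.
Qed.

Lemma vface_lam P i q : nondeg P -> vface P i q -> lamI i P (px q) (py q) = 0.
Proof.
  intros ND [[l1 [l2 [l3 [Hb [_ [_ [_ Hi]]]]]]] _].
  apply bary_iff in Hb; auto. destruct Hb as [E1 [E2 E3]].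
  destruct Hi as [[-> H]|[[-> H]|[-> H]]]; simpl; subst; auto.
Qed.

Lemma lam_cont P i q e : nondeg P -> e > 0 -> exists r, r > 0 /\ forall p, box q r p ->
  Rabs (lamI i P (px p) (py p) - lamI i P (px q) (py q)) < e.
Proof.
  intros ND He. destruct (lam_aff i P ND) as [A [B [C HA]]].
  destruct (cont_bil A B C 0 1 q e He) as [r [Hr H]].
  exists r; split; auto. intros p Hp. rewrite !HA.
  specialize (H p Hp). replace (0 * pz p + 1) with 1 in H by ring.
  replace (0 * pz q + 1) with 1 in H by ring. rewrite !Rmult_1_r in H. exact H.
Qed.

Lemma abs_lt_inv a b e : Rabs (a - b) < e -> b - e < a < b + e.
Proof. unfold Rabs. destruct (Rcase_abs (a - b)); intros; lra. Qed.

Lemma pos_persist P i q : nondeg P -> 0 < lamI i P (px q) (py q) ->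
  exists r, r > 0 /\ forall p, box q r p -> 0 < lamI i P (px p) (py p).
Proof.
  intros ND H. destruct (lam_cont P i q _ ND H) as [r [Hr Hc]].
  exists r; split; auto. intros p Hp. specialize (Hc p Hp). apply abs_lt_inv in Hc. lra.
Qed.

Lemma neg_persist P i q : nondeg P -> lamI i P (px q) (py q) < 0 ->
  exists r, r > 0 /\ forall p, box q r p -> lamI i P (px p) (py p) < 0.
Proof.
  intros ND H. destruct (lam_cont P i q (- lamI i P (px q) (py q)) ND) as [r [Hr Hc]]; [lra|].
  exists r; split; auto. intros p Hp. specialize (Hc p Hp). apply abs_lt_inv in Hc. lra.
Qed.

Lemma box_min q r1 r2 p : box q (Rmin r1 r2) p -> box q r1 p /\ box q r2 p.
Proof.
  pose proof (Rmin_l r1 r2). pose proof (Rmin_r r1 r2).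
  unfold box; intros; split; lra.
Qed.

Lemma int_open P q : nondeg P -> prism_int P q ->
  exists r, r > 0 /\ forall p, box q r p -> prism_int P p.
Proof.
  intros ND Hq. apply int_iff in Hq; auto.
  destruct Hq as [[H1 [H2 H3]] [Z1 Z2]].
  destruct (pos_persist P 0 q ND H1) as [r1 [R1 C1]].
  destruct (pos_persist P 1 q ND H2) as [r2 [R2 C2]].
  destruct (pos_persist P 2 q ND H3) as [r3 [R3 C3]].
  set (r4 := Rmin (pz q - h1 P) (h2 P - pz q)).
  assert (R4 : r4 > 0) by (apply Rmin_glb_lt; lra).
  exists (Rmin (Rmin r1 r2) (Rmin r3 r4)). split.
  { apply Rmin_glb_lt; apply Rmin_glb_lt; lra. }
  intros p Hp. apply box_min in Hp as [Ha Hb]. apply box_min in Ha as [Ha1 Ha2].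
  apply box_min in Hb as [Hb1 Hb2].
  apply int_iff; auto. split; [split; [|split]|].
  - apply (C1 p Ha1).
  - apply (C2 p Ha2).
  - apply (C3 p Hb1).
  - pose proof (Rmin_l (pz q - h1 P) (h2 P - pz q)).
    pose proof (Rmin_r (pz q - h1 P) (h2 P - pz q)).
    destruct Hb2 as [_ [_ Hz]]. unfold r4 in *. lra.
Qed.

Lemma notclosed_open P q : nondeg P -> ~ prism_closed P q ->
  exists r, r > 0 /\ forall p, box q r p -> ~ prism_closed P p.
Proof.
  intros ND Hq. rewrite closed_iff in Hq; auto.
  destruct (Rlt_dec (lam1 P (px q) (py q)) 0) as [L1|L1].
  { destruct (neg_persist P 0 q ND L1) as [r [Hr C]]. exists r; split; auto.
    intros p Hp Hc. apply closed_iff in Hc; auto. specialize (C p Hp). simpl in C. lra. }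
  destruct (Rlt_dec (lam2 P (px q) (py q)) 0) as [L2|L2].
  { destruct (neg_persist P 1 q ND L2) as [r [Hr C]]. exists r; split; auto.
    intros p Hp Hc. apply closed_iff in Hc; auto. specialize (C p Hp). simpl in C. lra. }
  destruct (Rlt_dec (lam3 P (px q) (py q)) 0) as [L3|L3].
  { destruct (neg_persist P 2 q ND L3) as [r [Hr C]]. exists r; split; auto.
    intros p Hp Hc. apply closed_iff in Hc; auto. specialize (C p Hp). simpl in C. lra. }
  destruct (Rlt_dec (pz q) (h1 P)) as [Z1|Z1].
  { exists (h1 P - pz q). split; [lra|]. intros p [_ [_ Hz]] Hc.
    apply closed_iff in Hc; auto. lra. }
  destruct (Rlt_dec (h2 P) (pz q)) as [Z2|Z2].
  { exists (pz q - h2 P). split; [lra|]. intros p [_ [_ Hz]] Hc.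
    apply closed_iff in Hc; auto. lra. }
  exfalso. apply Hq. split; [split; [|split]|]; lra.
Qed.

Lemma lmul_bound l a : 0 <= l <= 1 -> - Rabs a <= l * a <= Rabs a.
Proof. intros. unfold Rabs. destruct (Rcase_abs a); split; nra. Qed.

Definition Rb (P : prism) := 1 + Rabs (fst (va P)) + Rabs (snd (va P)) + Rabs (fst (vb P))
  + Rabs (snd (vb P)) + Rabs (fst (vc P)) + Rabs (snd (vc P)) + Rabs (h1 P) + Rabs (h2 P).

Lemma closed_bound P q : prism_closed P q ->
  - Rb P <= px q <= Rb P /\ - Rb P <= py q <= Rb P /\ - Rb P <= pz q <= Rb P.
Proof.
  intros [[l1 [l2 [l3 [[E [Ex Ey]] [H1 [H2 H3]]]]]] Hz].
  unfold Rb.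
  pose proof (Rabs_pos (fst (va P))); pose proof (Rabs_pos (snd (va P)));
  pose proof (Rabs_pos (fst (vb P))); pose proof (Rabs_pos (snd (vb P)));
  pose proof (Rabs_pos (fst (vc P))); pose proof (Rabs_pos (snd (vc P)));
  pose proof (Rabs_pos (h1 P)); pose proof (Rabs_pos (h2 P)).
  assert (B1 : 0 <= l1 <= 1) by lra. assert (B2 : 0 <= l2 <= 1) by lra.
  assert (B3 : 0 <= l3 <= 1) by lra.
  pose proof (lmul_bound l1 (fst (va P)) B1). pose proof (lmul_bound l2 (fst (vb P)) B2).
  pose proof (lmul_bound l3 (fst (vc P)) B3).
  pose proof (lmul_bound l1 (snd (va P)) B1). pose proof (lmul_bound l2 (snd (vb P)) B2).
  pose proof (lmul_bound l3 (snd (vc P)) B3).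
  pose proof (Rle_abs (h1 P)); pose proof (Rle_abs (h2 P)).
  pose proof (Rabs_Ropp (h1 P)); pose proof (Rle_abs (- h1 P)).
  pose proof (Rabs_Ropp (h2 P)); pose proof (Rle_abs (- h2 P)).
  split; [|split]; lra.
Qed.

Lemma HB1 (Q : (R -> Prop) -> Prop) a b : a <= b ->
  (forall S S', (forall t, S t -> S' t) -> Q S' -> Q S) ->
  (forall S S', Q S -> Q S' -> Q (fun t => S t \/ S' t)) ->
  (forall x, a <= x <= b -> exists r, r > 0 /\ Q (fun t => x - r < t < x + r)) ->
  Q (fun t => a <= t <= b).
Proof.
  intros Hab Mono Un Loc.
  set (E := fun t => a <= t <= b /\ Q (fun u => a <= u <= t)).
  assert (Hb : bound E) by (exists b; intros t [Ht _]; lra).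
  assert (Ea : E a).
  { split; [lra|]. destruct (Loc a) as [r [Hr Qr]]; [lra|].
    eapply Mono; [|exact Qr]. intros u Hu; simpl; lra. }
  destruct (completeness E Hb (ex_intro _ a Ea)) as [s [Hub Hlub]].
  assert (Hs1 : a <= s) by (apply Hub; exact Ea).
  assert (Hs2 : s <= b) by (apply Hlub; intros t [Ht _]; lra).
  destruct (Loc s) as [r [Hr Qs]]; [lra|].
  assert (Ht1 : exists t0, E t0 /\ s - r < t0).
  { apply NNPP; intro N.
    assert (s <= s - r); [|lra].
    apply Hlub. intros t Ht. apply Rnot_lt_le. intro Hlt. apply N. exists t; auto. }
  destruct Ht1 as [t0 [[[Ht0a Ht0b] Q0] Ht0c]].
  assert (Ht0s : t0 <= s) by (apply Hub; split; [lra|exact Q0]).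
  assert (Gen : forall t1, a <= t1 -> t1 <= s + r / 2 -> Q (fun u => a <= u <= t1)).
  { intros t1 H1 H2. eapply Mono; [|apply (Un _ _ Q0 Qs)].
    intros u Hu. simpl. destruct (Rle_dec u t0); [left; lra| right; lra]. }
  destruct (Rle_dec b (s + r / 2)) as [Hle|Hle].
  - apply Gen; lra.
  - assert (s + r / 2 <= s); [|lra]. apply Hub. split; [lra|]. apply Gen; lra.
Qed.

Definition cbox a1 b1 a2 b2 a3 b3 (p : point) :=
  a1 <= px p <= b1 /\ a2 <= py p <= b2 /\ a3 <= pz p <= b3.

Lemma HB3 (Q : (point -> Prop) -> Prop) a1 b1 a2 b2 a3 b3 :
  a1 <= b1 -> a2 <= b2 -> a3 <= b3 ->
  (forall S S', (forall t, S t -> S' t) -> Q S' -> Q S) ->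
  (forall S S', Q S -> Q S' -> Q (fun t => S t \/ S' t)) ->
  (forall q, cbox a1 b1 a2 b2 a3 b3 q -> exists r, r > 0 /\ Q (box q r)) ->
  Q (cbox a1 b1 a2 b2 a3 b3).
Proof.
  intros H1 H2 H3 Mono Un Loc.
  assert (Lz : forall x y, a1 <= x <= b1 -> a2 <= y <= b2 -> exists r, r > 0 /\
     Q (fun p => x - r < px p < x + r /\ y - r < py p < y + r /\ a3 <= pz p <= b3)).
  { intros x y Hx Hy.
    apply (HB1 (fun S3 => exists r, r > 0 /\
       Q (fun p => x - r < px p < x + r /\ y - r < py p < y + r /\ S3 (pz p))) a3 b3 H3).
    - intros S S' HS [r [Hr Qr]]. exists r; split; auto.
      eapply Mono; [|exact Qr]. intros p [? [? ?]]; auto.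
    - intros S S' [r [Hr Qr]] [r' [Hr' Qr']]. exists (Rmin r r'). split.
      { apply Rmin_glb_lt; lra. }
      pose proof (Rmin_l r r'). pose proof (Rmin_r r r').
      eapply Mono; [|exact (Un _ _ Qr Qr')].
      intros p [Ha [Hb [Hc|Hc]]]; [left|right]; repeat split; auto; lra.
    - intros z Hz. destruct (Loc (x, y, z)) as [r [Hr Qr]].
      { unfold cbox, px, py, pz; simpl; auto. }
      exists r. split; auto. exists r. split; auto. }
  assert (Ly : forall x, a1 <= x <= b1 -> exists r, r > 0 /\
     Q (fun p => x - r < px p < x + r /\ a2 <= py p <= b2 /\ a3 <= pz p <= b3)).
  { intros x Hx.
    apply (HB1 (fun S2 => exists r, r > 0 /\
       Q (fun p => x - r < px p < x + r /\ S2 (py p) /\ a3 <= pz p <= b3)) a2 b2 H2).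
    - intros S S' HS [r [Hr Qr]]. exists r; split; auto.
      eapply Mono; [|exact Qr]. intros p [? [? ?]]; auto.
    - intros S S' [r [Hr Qr]] [r' [Hr' Qr']]. exists (Rmin r r'). split.
      { apply Rmin_glb_lt; lra. }
      pose proof (Rmin_l r r'). pose proof (Rmin_r r r').
      eapply Mono; [|exact (Un _ _ Qr Qr')].
      intros p [Ha [[Hb|Hb] Hc]]; [left|right]; repeat split; auto; lra.
    - intros y Hy. destruct (Lz x y Hx Hy) as [r [Hr Qr]].
      exists r. split; auto. exists r. split; auto. }
  apply (HB1 (fun S1 => Q (fun p => S1 (px p) /\ a2 <= py p <= b2 /\ a3 <= pz p <= b3)) a1 b1 H1).
  - intros S S' HS Qr. eapply Mono; [|exact Qr]. intros p [? [? ?]]; auto.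
  - intros S S' Qr Qr'. eapply Mono; [|exact (Un _ _ Qr Qr')].
    intros p [[Ha|Ha] [Hb Hc]]; [left|right]; auto.
  - intros x Hx. destruct (Ly x Hx) as [r [Hr Qr]]. exists r. split; auto.
Qed.

Lemma fold_max (f : point -> R) v0 L :
  v0 < v0 + 1 ->
  (forall k, In k L -> f k <= fold_right (fun k acc => Rmax (f k) acc) v0 L) /\
  ((forall k, In k L -> f k < v0 + 1) -> fold_right (fun k acc => Rmax (f k) acc) v0 L < v0 + 1).
Proof.
  intros _. induction L as [|k L [IH1 IH2]]; simpl.
  - split; [intros k []|intros; lra].
  - split.
    + intros k' [<-|Hk].
      * apply Rmax_l.
      * eapply Rle_trans; [apply IH1; auto| apply Rmax_r].
    + intros H. apply Rmax_lub_lt; auto.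
Qed.

Lemma small_mul d e a r : Rabs d < e -> e > 0 -> e * (Rabs a + 1) <= r -> - r < d * a < r.
Proof.
  intros Hd He Hr.
  assert (H : Rabs (d * a - 0) < r).
  { rewrite Rminus_0_r, Rabs_mult. pose proof (Rabs_pos a). pose proof (Rabs_pos d). nra. }
  apply abs_lt_inv in H. lra.
Qed.

Lemma line_conv (f hh Ps : point -> R) (l : R -> point) :
  (forall t r, r > 0 -> exists e, e > 0 /\ forall s, t - e < s < t + e -> box (l t) r (l s)) ->
  (forall q, (exists r, r > 0 /\ forall p, box q r p -> f p = Ps p) \/
             (exists r, r > 0 /\ forall p, box q r p -> f p = hh p)) ->
  convex_R (fun t => hh (l t)) -> convex_R (fun t => Ps (l t)) -> convex_R (fun t => f (l t)).
Proof.
  intros Lc Loc Ch Cp. apply local_convex. intros t.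
  destruct (Loc (l t)) as [[r [Hr E]]|[r [Hr E]]];
    destruct (Lc t r Hr) as [e [He Hs]]; exists e; split; auto.
  - apply (conv_on_ext _ (fun t => Ps (l t))).
    + intros s Hs'. apply E, Hs. lra.
    + apply convex_conv_on; auto.
  - apply (conv_on_ext _ (fun t => hh (l t))).
    + intros s Hs'. apply E, Hs. lra.
    + apply convex_conv_on; auto.
Qed.

Lemma Lc_h x0 y0 c a b : forall t r, r > 0 -> exists e, e > 0 /\ forall s, t - e < s < t + e ->
  box (x0 + t * a, y0 + t * b, c) r (x0 + s * a, y0 + s * b, c).
Proof.
  intros t r Hr. set (e := r / (Rabs a + Rabs b + 1)).
  pose proof (Rabs_pos a). pose proof (Rabs_pos b).
  assert (He : e > 0) by (apply Rdiv_lt_0_compat; lra).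
  assert (Ee : e * (Rabs a + Rabs b + 1) = r) by (unfold e; field; lra).
  exists e; split; auto. intros s Hs.
  assert (Hd : Rabs (s - t) < e) by (apply abs_small; lra).
  assert (A1 : - r < (s - t) * a < r) by (apply (small_mul _ e); auto; nra).
  assert (A2 : - r < (s - t) * b < r) by (apply (small_mul _ e); auto; nra).
  unfold box, px, py, pz; simpl. repeat split; nra.
Qed.

Lemma Lc_v x0 y0 z0 : forall t r, r > 0 -> exists e, e > 0 /\ forall s, t - e < s < t + e ->
  box (x0, y0, z0 + t) r (x0, y0, z0 + s).
Proof.
  intros t r Hr. exists r; split; auto. intros s Hs.
  unfold box, px, py, pz; simpl. repeat split; lra.
Qed.

Lemma glue21 (f hh Ps : point -> R) :
  (forall q, (exists r, r > 0 /\ forall p, box q r p -> f p = Ps p) \/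
             (exists r, r > 0 /\ forall p, box q r p -> f p = hh p)) ->
  convex21 hh -> convex21 Ps -> convex21 f.
Proof.
  intros Loc [H1 H2] [P1 P2]. split.
  - intros x0 y0 c a b. apply (line_conv f hh Ps (fun t => (x0 + t * a, y0 + t * b, c))); auto.
    apply Lc_h.
  - intros x0 y0 z0. apply (line_conv f hh Ps (fun t => (x0, y0, z0 + t))); auto.
    apply Lc_v.
Qed.

Definition wt (top : bool) P z := if top then h2 P - z else z - h1 P.

Lemma wt_aff top P : exists Dd E, forall z, wt top P z = Dd * z + E.
Proof.
  destruct top; simpl.
  - exists (-1), (h2 P). intros; ring.
  - exists 1, (- h1 P). intros; ring.
Qed.

Lemma main_lemma K M P i top : nondeg P -> (i < 3)%nat ->
  (forall x, rc_hull K x -> M x) -> (forall k, In k K -> ~ prism_int P k) ->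
  (forall q, M q -> prism_bd P q -> vface P i q \/ hface P top q) ->
  forall x, rc_hull K x -> ~ prism_int P x.
Proof.
  intros ND Hi HM HK Hbd x Hx Hint.
  destruct (lam_aff i P ND) as [A [B [C HA]]].
  destruct (wt_aff top P) as [Dd [E HW]].
  set (gg := fun p : point => lamI i P (px p) (py p) * wt top P (pz p)).
  assert (Hgx : 0 < gg x).
  { apply int_iff in Hint; auto. destruct Hint as [[L1 [L2 L3]] [Z1 Z2]].
    unfold gg. apply Rmult_lt_0_compat.
    - destruct i as [|[|[|i]]]; simpl; auto; lia.
    - destruct top; simpl; lra. }
  set (c := gg x / 2).
  assert (Hc : c > 0) by (unfold c; lra).
  set (G := fun p => gg p - c).
  assert (GE : forall p, G p = (A * px p + B * py p + C) * (Dd * pz p + E) - c).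
  { intros p. unfold G, gg. rewrite HA, HW. reflexivity. }
  assert (Gcont : forall q e, e > 0 -> exists r, r > 0 /\ forall p, box q r p -> G q - e < G p < G q + e).
  { intros q e He. destruct (cont_bil A B C Dd E q e He) as [r [Hr H]].
    exists r; split; auto. intros p Hp. specialize (H p Hp).
    rewrite !GE. apply abs_lt_inv in H. lra. }
  assert (Gc21 : convex21 G).
  { split.
    - intros x0 y0 c0 a b.
      apply (convex_R_aff _ ((A * a + B * b) * (Dd * c0 + E)) ((A * x0 + B * y0 + C) * (Dd * c0 + E) - c)).
      intros t. rewrite GE. unfold px, py, pz; simpl. ring.
    - intros x0 y0 z0.
      apply (convex_R_aff _ ((A * x0 + B * y0 + C) * Dd) ((A * x0 + B * y0 + C) * (Dd * z0 + E) - c)).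
      intros t. rewrite GE. unfold px, py, pz; simpl. ring. }
  assert (Bad : forall q, prism_bd P q -> - (c / 2) <= G q -> ~ rc_hull K q).
  { intros q Hq HG Hrc. apply HM in Hrc. destruct (Hbd q Hrc Hq) as [Hv|Hh].
    - apply vface_lam in Hv; auto. unfold G, gg in HG. rewrite Hv in HG. lra.
    - destruct Hh as [_ Hz]. unfold G, gg in HG.
      assert (wt top P (pz q) = 0) by (unfold wt; destruct top; rewrite Hz; ring).
      rewrite H in HG. lra. }
  set (Q := fun S : point -> Prop => exists h, convex21 h /\ (forall k, In k K -> h k <= 0) /\
              (forall p, S p -> prism_bd P p -> G p < h p)).
  assert (QB : Q (cbox (- Rb P) (Rb P) (- Rb P) (Rb P) (- Rb P) (Rb P))).
  { assert (HR : 0 <= Rb P).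
    { unfold Rb. pose proof (Rabs_pos (fst (va P))); pose proof (Rabs_pos (snd (va P)));
      pose proof (Rabs_pos (fst (vb P))); pose proof (Rabs_pos (snd (vb P)));
      pose proof (Rabs_pos (fst (vc P))); pose proof (Rabs_pos (snd (vc P)));
      pose proof (Rabs_pos (h1 P)); pose proof (Rabs_pos (h2 P)). lra. }
    apply HB3; try lra.
    - intros S S' HS [h [H1 [H2 H3]]]. exists h; split; [auto|split; [auto|]].
      intros p Hp Hb; apply H3; auto.
    - intros S S' [h [H1 [H2 H3]]] [h' [H1' [H2' H3']]].
      exists (fun p => Rmax (h p) (h' p)). split; [apply c21_max; auto|split].
      + intros k Hk. apply Rmax_lub; auto.
      + intros p [Hp|Hp] Hb.
        * eapply Rlt_le_trans; [apply H3; auto| apply Rmax_l].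
        * eapply Rlt_le_trans; [apply H3'; auto| apply Rmax_r].
    - intros q _.
      destruct (Rlt_dec (G q) (- (c / 2))) as [Lq|Lq].
      + destruct (Gcont q (- (c / 2) - G q)) as [r [Hr Hp]]; [lra|].
        exists r; split; auto. exists (fun _ => - (c / 2)). split; [apply c21_const|split].
        * intros; lra.
        * intros p Hb _. specialize (Hp p Hb). lra.
      + destruct (classic (prism_bd P q)) as [Hq|Hq].
        * assert (Nrc := Bad q Hq ltac:(lra)).
          unfold rc_hull in Nrc.
          apply not_all_ex_not in Nrc. destruct Nrc as [f Nf].
          apply imply_to_and in Nf. destruct Nf as [Cf Nf].
          set (m := fold_right (fun k acc => Rmax (f k) acc) (f q - 1) K).
          assert (Hlt : forall k, In k K -> f k < f q - 1 + 1).
          { intros k Hk. apply Rnot_le_lt. intro. apply Nf. exists k. split; auto. lra. }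
          destruct (fold_max f (f q - 1) K ltac:(lra)) as [Fm1 Fm2].
          specialize (Fm2 Hlt). fold m in Fm1, Fm2.
          set (al := 1 / (f q - m)).
          assert (Hal : al > 0) by (unfold al; apply Rdiv_lt_0_compat; lra).
          set (F := fun p => al * f p + (- m * al)).
          assert (CF : convex21 F) by (apply c21_scale; auto; lra).
          assert (Fq : F q = 1) by (unfold F, al; field; lra).
          assert (FK : forall k, In k K -> F k <= 0).
          { intros k Hk. unfold F. specialize (Fm1 k Hk).
            assert (al * f k <= al * m) by (apply Rmult_le_compat_l; lra). lra. }
          destruct (lsc21 F q (1 / 2) CF ltac:(lra)) as [r1 [Hr1 L1]].
          destruct (Gcont q 1 ltac:(lra)) as [r2 [Hr2 L2]].
          set (lm := 2 * (Rabs (G q) + 1)).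
          assert (Hlm : lm > 0) by (unfold lm; pose proof (Rabs_pos (G q)); lra).
          exists (Rmin r1 r2). split; [apply Rmin_glb_lt; lra|].
          exists (fun p => lm * F p + 0). split; [apply c21_scale; auto; lra|split].
          -- intros k Hk. specialize (FK k Hk). nra.
          -- intros p Hb _. apply box_min in Hb as [Hb1 Hb2].
             specialize (L1 p Hb1). specialize (L2 p Hb2). rewrite Fq in L1.
             pose proof (Rle_abs (G q)). unfold lm in *. nra.
        * destruct (classic (prism_int P q)) as [Hiq|Hiq].
          -- destruct (int_open P q ND Hiq) as [r [Hr Hp]].
             exists r; split; auto. exists (fun _ => 0). split; [apply c21_const|split].
             ++ intros; lra.
             ++ intros p Hb [_ Hn]. exfalso. apply Hn, Hp, Hb.
          -- assert (Hnc : ~ prism_closed P q) by (intro; apply Hq; split; auto).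
             destruct (notclosed_open P q ND Hnc) as [r [Hr Hp]].
             exists r; split; auto. exists (fun _ => 0). split; [apply c21_const|split].
             ++ intros; lra.
             ++ intros p Hb [Hn _]. exfalso. apply (Hp p Hb Hn). }
  destruct QB as [h [Ch [hK hB]]].
  assert (hB' : forall p, prism_bd P p -> G p < h p).
  { intros p Hp. apply hB; auto. destruct Hp as [Hp _]. apply closed_bound in Hp.
    unfold cbox; auto. }
  set (f := fun p => if excluded_middle_informative (prism_int P p) then Rmax (G p) (h p) else h p).
  assert (Cf : convex21 f).
  { apply (glue21 f h (fun p => Rmax (G p) (h p))); auto; [|apply c21_max; auto].
    intros q. destruct (classic (prism_int P q)) as [Hiq|Hiq].
    - left. destruct (int_open P q ND Hiq) as [r [Hr Hp]]. exists r; split; auto.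
      intros p Hb. unfold f. destruct (excluded_middle_informative (prism_int P p)); auto.
      exfalso; auto.
    - right. destruct (classic (prism_closed P q)) as [Hcq|Hcq].
      + assert (Lt : G q < h q) by (apply hB'; split; auto).
        set (e := (h q - G q) / 2).
        destruct (lsc21 h q e Ch ltac:(unfold e; lra)) as [r1 [Hr1 L1]].
        destruct (Gcont q e ltac:(unfold e; lra)) as [r2 [Hr2 L2]].
        exists (Rmin r1 r2). split; [apply Rmin_glb_lt; lra|].
        intros p Hb. apply box_min in Hb as [Hb1 Hb2].
        specialize (L1 p Hb1). specialize (L2 p Hb2).
        unfold f. destruct (excluded_middle_informative (prism_int P p)); auto.
        apply Rmax_right. unfold e in *. lra.
      + destruct (notclosed_open P q ND Hcq) as [r [Hr Hp]]. exists r; split; auto.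
        intros p Hb. unfold f. destruct (excluded_middle_informative (prism_int P p)) as [Hip|]; auto.
        exfalso. apply (Hp p Hb). destruct Hip as [[l1 [l2 [l3 [Hb' [? [? ?]]]]]] Hz].
        split; [exists l1, l2, l3; split; [exact Hb'|]; repeat split; lra | lra]. }
  destruct (Hx f Cf) as [k [Hk Hfk]].
  assert (fk : f k = h k).
  { unfold f. destruct (excluded_middle_informative (prism_int P k)); auto.
    exfalso; apply (HK k Hk); auto. }
  assert (fx : G x <= f x).
  { unfold f. destruct (excluded_middle_informative (prism_int P x)); [apply Rmax_l| contradiction]. }
  specialize (hK k Hk).
  assert (G x = c) by (unfold G, c; lra).
  lra.
Qed.

Theorem theorem4p3 (K : list point) (M : point -> Prop) (p : point) (P : prism) :
  (forall x, rc_hull K x -> M x) ->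
  M p -> ~ In p K ->
  D_prism M K p P ->
  forall x, rc_hull K x -> M x /\ ~ prism_int P x.
Proof.
  intros HM _ _ [ND [_ [HK [i [top [Hi Hbd]]]]]] x Hx.
  split; [apply HM; auto|].
  apply (main_lemma K M P i top ND Hi HM HK Hbd x Hx).
Qed.
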